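(* Assume the standing assumptions and let $f$ satisfy (F); let $g$, $b_g$, $\gamma_g$ be as below. Then the problem $$\partial_t\tilde s=\Delta_h\tilde s+b_g\big[D^+_hg\,D^+_h\tilde s+D^-_hg\,D^-_h\tilde s\big]+\gamma_g\,\tilde s\,(Bf-1)\ \text{ on }(0,T]\times\Omega_h^+,$$ $$\tilde s(0,x)=s_0(x)\ (x\in\Omega_h^+),\qquad \tilde s(t,0)=\psi(t)\ (t\in[0,T]),$$ has a unique bounded solution $\tilde s$, and $0\le\tilde s(t,x)\le\eta$ for all $(t,x)\in[0,T]\times\Omega_h^+$.
   Context: Discrete setting: $h>0$, $\Omega_h^+=\{h,2h,\dots\}$, $\Omega_{h,0}^+=\Omega_h^+\cup\{0\}$, $\|f\|_{L^p(\Omega_h^+)}=(h\sum_{z\in\Omega_h^+}|f(z)|^p)^{1/p}$, $D^+_hf(x)=\frac{f(x+h)-f(x)}{h}$, $D^-_hf(x)=\frac{f(x)-f(x-h)}{h}$, $\Delta_hf(x)=\frac{f(x+h)-2f(x)+f(x-h)}{h^2}$. Standing assumptions: $A=1$, $B\in\{-1,1\}$, $\varphi(c)=A+Bc$, $\lambda>0$, $T>0$, $\eta>0$; $\psi\in C^\beta([0,T])$ for some $\beta\in(1/4,1/2)$ with $0\le\psi\le\eta$, $\psi(0)=0$; $s_0:\Omega_{h,0}^+\to\mathbb{R}$ with $0\le s_0\le\eta$, $s_0(0)=0$, $s_0,D^+_hs_0\in L^2(\Omega_h^+)$; $c_0:\Omega_{h,0}^+\to\mathbb{R}$ with $0<c_m\le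 c_0\le C_0$ and $C_0-c_0,\ D^+_hc_0\in L^2(\Omega_h^+)$; there are constants $0<\varphi_{\min}\le\varphi_{\max}$ with $\varphi_{\min}\le\varphi(c)\le\varphi_{\max}$ for all $c\in[0,C_0]$; if $B=1$ then $\eta<1$. Conditions (F) on a Borel $f:[0,T]\times\Omega_{h,0}^+\to\mathbb{R}$, for some $K>0$: $f\in C([0,T],L^2(\Omega_h^+))$, $\sup_t\|f(t)\|^2_{L^2}+\int_0^T\|D^+_hf(t)\|^2_{L^2}dt\le K$, $f\ge0$, $f(t,0)=\psi(t)$, $0\le f\le\eta$. Linearized coefficients: $g(t,x)=Ac_0(x)[\varphi(c_0(x))e^{\lambda A\int_0^tf(\tau,x)d\tau}-Bc_0(x)]^{-1}$, $b_g=\frac{B}{2(A+Bg)}$, $\gamma_g=\lambda g$. *)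

(* Defs.v *)
From Stdlib Require Import Reals Lra.
From Coquelicot Require Import Coquelicot.
Open Scope R_scope.

(* Grid functions on Omega_{h,0}^+ = {0, h, 2h, ...} are encoded as u : nat -> R,
   u k standing for u(k h).  Omega_h^+ corresponds to k >= 1. *)

Definition inL2 (u : nat -> R) : Prop := ex_series (fun k => (u (S k)) ^ 2).

Definition L2norm (h : R) (u : nat -> R) : R := sqrt (h * Series (fun k => (u (S k)) ^ 2)).

Definition Dp (h : R) (u : nat -> R) (k : nat) : R := (u (S k) - u k) / h.
Definition Dm (h : R) (u : nat -> R) (k : nat) : R := (u k - u (pred k)) / h.
Definition Lap (h : R) (u : nat -> R) (k : nat) : R :=
  (u (S k) - 2 * u k + u (pred k)) / (h ^ 2).

Definition contL2 (h T : R) (f : R -> nat -> R) : Prop :=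
  (forall t, 0 <= t <= T -> inL2 (f t)) /\
  forall t0, 0 <= t0 <= T -> forall eps, 0 < eps -> exists delta, 0 < delta /\
    forall t, 0 <= t <= T -> Rabs (t - t0) < delta ->
      L2norm h (fun k => f t k - f t0 k) < eps.

Definition condF (h T eta : R) (psi : R -> R) (K : R) (f : R -> nat -> R) : Prop :=
  0 < K /\
  contL2 h T f /\
  (forall t, 0 <= t <= T -> inL2 (Dp h (f t))) /\
  ex_RInt (fun t => (L2norm h (Dp h (f t))) ^ 2) 0 T /\
  (forall t, 0 <= t <= T ->
     (L2norm h (f t)) ^ 2 + RInt (fun t => (L2norm h (Dp h (f t))) ^ 2) 0 T <= K) /\
  (forall t k, 0 <= t <= T -> 0 <= f t k) /\
  (forall t, 0 <= t <= T -> f t 0%nat = psi t) /\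
  (forall t k, 0 <= t <= T -> 0 <= f t k <= eta).

Definition phi (A B c : R) : R := A + B * c.

Definition holder (T beta : R) (psi : R -> R) : Prop :=
  exists L, 0 <= L /\ forall t s, 0 <= t <= T -> 0 <= s <= T -> t <> s ->
    Rabs (psi t - psi s) <= L * Rpower (Rabs (t - s)) beta.

Definition gco (A B lam : R) (c0 : nat -> R) (f : R -> nat -> R) (t : R) (k : nat) : R :=
  A * c0 k / (phi A B (c0 k) * exp (lam * A * RInt (fun tau => f tau k) 0 t) - B * c0 k).
Definition bco (A B lam : R) (c0 : nat -> R) (f : R -> nat -> R) (t : R) (k : nat) : R :=
  B / (2 * (A + B * gco A B lam c0 f t k)).
Definition gammaco (A B lam : R) (c0 : nat -> R) (f : R -> nat -> R) (t : R) (k : nat) : R :=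
  lam * gco A B lam c0 f t k.

Definition rhs (h A B lam : R) (c0 : nat -> R) (f : R -> nat -> R)
    (s : R -> nat -> R) (t : R) (k : nat) : R :=
  Lap h (s t) k
  + bco A B lam c0 f t k *
      (Dp h (gco A B lam c0 f t) k * Dp h (s t) k
       + Dm h (gco A B lam c0 f t) k * Dm h (s t) k)
  + gammaco A B lam c0 f t k * s t k * (B * f t k - 1).

Definition left_deriv (u : R -> R) (t l : R) : Prop :=
  filterlim (fun tau => (u tau - u t) / (tau - t)) (at_left t) (locally l).

Definition is_solution (h T A B lam : R) (psi : R -> R) (s0 c0 : nat -> R)
    (f s : R -> nat -> R) : Prop :=
  (forall k, (1 <= k)%nat ->
     forall t0, 0 <= t0 <= T -> forall eps, 0 < eps -> exists delta, 0 < delta /\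
       forall t, 0 <= t <= T -> Rabs (t - t0) < delta -> Rabs (s t k - s t0 k) < eps) /\
  (forall k, (1 <= k)%nat -> forall t, 0 < t < T ->
     is_derive (fun tau => s tau k) t (rhs h A B lam c0 f s t k)) /\
  (forall k, (1 <= k)%nat -> left_deriv (fun tau => s tau k) T (rhs h A B lam c0 f s T k)) /\
  (forall k, (1 <= k)%nat -> s 0 k = s0 k) /\
  (forall t, 0 <= t <= T -> s t 0%nat = psi t).

Definition bounded_on (T : R) (s : R -> nat -> R) : Prop :=
  exists M, forall t k, 0 <= t <= T -> Rabs (s t k) <= M.

(* Main.v *)
Require Import Defs.
From Stdlib Require Import Reals Lra Lia.
From Coquelicot Require Import Coquelicot.
Open Scope R_scope.


Definition cl (T t : R) : R := Rmax 0 (Rmin T t).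

Lemma cl_in T t : 0 <= T -> 0 <= cl T t <= T.
Proof. intros. unfold cl. unfold Rmax, Rmin. repeat destruct Rle_dec; lra. Qed.
Lemma cl_id T t : 0 <= t <= T -> cl T t = t.
Proof. intros. unfold cl, Rmax, Rmin. repeat destruct Rle_dec; lra. Qed.
Lemma cl_lip T x y : 0 <= T -> Rabs (cl T x - cl T y) <= Rabs (x - y).
Proof. intros. unfold cl, Rmax, Rmin. repeat destruct Rle_dec; unfold Rabs; repeat destruct Rcase_abs; lra. Qed.

Lemma cont_of_eps (f : R -> R) x :
  (forall eps, 0 < eps -> exists d, 0 < d /\ forall y, Rabs (y - x) < d -> Rabs (f y - f x) < eps) ->
  continuous f x.
Proof.
  intros H. apply filterlim_locally. intros eps.
  destruct (H eps (cond_pos eps)) as [d [Hd Hy]].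
  exists (mkposreal d Hd). intros y Hb. apply Hy. exact Hb.
Qed.

Lemma eps_of_cont (f : R -> R) x : continuous f x ->
  forall eps, 0 < eps -> exists d, 0 < d /\ forall y, Rabs (y - x) < d -> Rabs (f y - f x) < eps.
Proof.
  intros H eps He. apply filterlim_locally with (eps := mkposreal eps He) in H.
  destruct H as [d Hd]. exists d. split. apply cond_pos. intros y Hy. apply (Hd y). exact Hy.
Qed.

Lemma cl_cont T x : 0 <= T -> continuous (cl T) x.
Proof. intros HT. apply cont_of_eps. intros e He. exists e. split; auto.
  intros y Hy. eapply Rle_lt_trans. apply cl_lip; auto. auto. Qed.

Lemma growth (v dv : R -> R) (T L K : R) :
  0 < L -> 0 <= K -> (forall x, continuous v x) -> v 0 = 0 ->
  (forall x, 0 < x < T -> is_derive v x (dv x)) ->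
  (forall x, 0 < x < T -> Rabs (dv x) <= 2 * L * K * exp (2 * L * x)) ->
  forall t, 0 <= t <= T -> Rabs (v t) <= K * exp (2 * L * t).
Proof.
  intros HL HK Hc H0 Hd Hb t Ht.
  assert (HQ : forall x, is_derive (fun y => K * exp (2 * L * y)) x (2 * L * K * exp (2 * L * x))).
  { intros x. auto_derive; auto. ring. }
  destruct (Req_dec t 0) as [Ht0|Ht0].
  { subst. rewrite H0. rewrite Rabs_R0. apply Rmult_le_pos; auto. left; apply exp_pos. }
  assert (Kle : K * exp (2 * L * 0) <= K * exp (2*L*t)).
  { apply Rmult_le_compat_l; auto. rewrite Rmult_0_r, exp_0.
    replace 1 with (exp 0) by apply exp_0. destruct (Rle_lt_or_eq_dec 0 (2*L*t)).
    apply Rmult_le_pos; lra. left; apply exp_increasing; auto. rewrite <- e; lra. }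
  assert (M1 : forall sg, sg = 1 \/ sg = -1 ->
     sg * v t - K * exp (2*L*t) <= sg * v 0 - K * exp (2*L*0)).
  { intros sg Hsg.
    set (g := fun y => sg * v y - K * exp (2 * L * y)).
    set (dg := fun y => Rmin 0 (sg * dv y - 2 * L * K * exp (2 * L * y))).
    destruct (MVT_gen g 0 t dg) as [c [Hc1 Hc2]].
    - intros x Hx. rewrite Rmin_left in Hx by lra. rewrite Rmax_right in Hx by lra.
      unfold dg. rewrite Rmin_right.
      unfold g. apply @is_derive_minus. apply @is_derive_scal. apply Hd. lra. apply HQ.
      assert (Rabs (dv x) <= 2 * L * K * exp (2 * L * x)) by (apply Hb; lra).
      destruct Hsg; subst sg; apply Rabs_le_between in H; lra.
    - intros x _. apply continuity_pt_filterlim. unfold g.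
      apply (continuous_minus (fun y => sg * v y) (fun y => K * exp (2*L*y))).
      apply (continuous_scal_r sg v). apply Hc.
      apply ex_derive_continuous. eexists. apply HQ.
    - unfold g in Hc2. assert (dg c <= 0) by (unfold dg; apply Rmin_l).
      assert (dg c * (t - 0) <= 0). apply Rmult_le_0_r; lra. lra. }
  rewrite H0 in M1.
  pose proof (M1 1 (or_introl eq_refl)). pose proof (M1 (-1) (or_intror eq_refl)).
  assert (0 <= K * exp (2*L*0)) by (apply Rmult_le_pos; auto; left; apply exp_pos).
  apply Rabs_le_between. lra.
Qed.


Lemma dcont (f : R -> R) x : ex_derive f x -> continuous f x.
Proof. apply (ex_derive_continuous (K:=R_AbsRing) (V:=R_NormedModule)). Qed.

Lemma cplus (f g : R -> R) x : continuous f x -> continuous g x -> continuous (fun y => f y + g y) x.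
Proof. intros; apply (continuous_plus f g); auto. Qed.
Lemma cminus (f g : R -> R) x : continuous f x -> continuous g x -> continuous (fun y => f y - g y) x.
Proof. intros; apply (continuous_minus f g); auto. Qed.
Lemma cmult (f g : R -> R) x : continuous f x -> continuous g x -> continuous (fun y => f y * g y) x.
Proof. intros; apply (continuous_mult f g); auto. Qed.
Lemma cconst (c x : R) : continuous (fun _ : R => c) x.
Proof. apply continuous_const. Qed.
Lemma ccl (f : R -> R) T x : 0 <= T -> (forall y, continuous f y) -> continuous (fun y => f (cl T y)) x.
Proof. intros. apply (continuous_comp (cl T) f). apply cl_cont; auto. auto. Qed.
Lemma cexpl (M : R) x : continuous (fun t => exp (M * t)) x.
Proof. apply dcont. auto_derive. auto. Qed.

Lemma rint_deriv (F : R -> R) : (forall x, continuous F x) ->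
  forall t, is_derive (fun t => RInt F 0 t) t (F t).
Proof.
  intros HF t. apply (is_derive_RInt F (fun t => RInt F 0 t) 0 t).
  apply filter_forall. intros b. apply (RInt_correct (V:=R_CompleteNormedModule)).
  apply (ex_RInt_continuous (V:=R_CompleteNormedModule)). intros; auto.
  auto.
Qed.
Lemma rint_cont (F : R -> R) : (forall x, continuous F x) ->
  forall t, continuous (fun t => RInt F 0 t) t.
Proof. intros HF t. apply dcont. eexists. apply rint_deriv; auto. Qed.
Lemma rint_ex (F : R -> R) a b : (forall x, continuous F x) -> ex_RInt F a b.
Proof. intros. apply (ex_RInt_continuous (V:=R_CompleteNormedModule)). auto. Qed.

Definition ODEH (T eta M0 : R) (a c d : nat -> R -> R) (p : R -> R) (s0 : nat -> R) : Prop :=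
  0 < T /\ 0 < eta /\ 0 < M0 /\
  (forall k t, (1 <= k)%nat -> 0 <= a k t <= M0 /\ 0 <= c k t <= M0 /\ Rabs (d k t) <= M0
                /\ a k t + c k t + d k t <= 0) /\
  (forall k t, (1 <= k)%nat -> continuous (a k) t /\ continuous (c k) t /\ continuous (d k) t) /\
  (forall t, continuous p t) /\ (forall t, 0 <= p t <= eta) /\
  (forall k, (1 <= k)%nat -> 0 <= s0 k <= eta).

Definition PP (M0 : R) (a c d : nat -> R -> R) (u : R -> nat -> R) (t : R) (k : nat) : R :=
  a k t * u t (S k) + c k t * u t (pred k) + (d k t + M0) * u t k.

Fixpoint it (T M0 : R) (a c d : nat -> R -> R) (p : R -> R) (s0 : nat -> R) (n : nat)
  : R -> nat -> R := fun t k =>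
  match k with
  | O => exp (M0 * t) * p t
  | _ => match n with
         | O => s0 k
         | S m => s0 k + RInt (fun x => PP M0 a c d (it T M0 a c d p s0 m) (cl T x) k) 0 t
         end
  end.



Lemma exp_ge1 x : 0 <= x -> 1 <= exp x.
Proof. intros. rewrite <- exp_0. destruct H. left; apply exp_increasing; auto. subst; lra. Qed.

Lemma rint_derive_eq (f df : R -> R) a b : (forall x, is_derive f x (df x)) ->
  (forall x, continuous df x) -> RInt df a b = f b - f a.
Proof.
  intros Hd Hc. apply (is_RInt_unique (V:=R_CompleteNormedModule)).
  apply (is_RInt_derive (V:=R_CompleteNormedModule)); intros; auto.
Qed.

Lemma rint_exp (M E t : R) : RInt (fun x => M * E * exp (M * x)) 0 t = E * exp (M * t) - E.
Proof.
  rewrite (rint_derive_eq (fun x => E * exp (M * x))).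
  - replace (M * 0) with 0 by ring. rewrite exp_0. change (E * exp (M*t) - E * 1 = E * exp (M*t) - E). ring.
  - intros x. auto_derive. auto. ring.
  - intros x. apply cmult. apply cconst. apply cexpl.
Qed.

Lemma PP_cont T M0 a c d (u : R -> nat -> R) k x : 0 <= T ->
  (forall y, continuous (a k) y /\ continuous (c k) y /\ continuous (d k) y) ->
  (forall j y, continuous (fun t => u t j) y) ->
  continuous (fun x => PP M0 a c d u (cl T x) k) x.
Proof.
  intros HT Hac Hu. unfold PP.
  apply cplus; [apply cplus|]; apply cmult.
  - apply (ccl (a k)); auto. intros; apply Hac.
  - apply (ccl (fun y => u y (S k))); auto.
  - apply (ccl (c k)); auto. intros; apply Hac.
  - apply (ccl (fun y => u y (pred k))); auto.
  - apply cplus. apply (ccl (d k)); auto. intros; apply Hac. apply cconst.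
  - apply (ccl (fun y => u y k)); auto.
Qed.

Lemma it_cont T eta M0 a c d p s0 (H : ODEH T eta M0 a c d p s0) :
  forall n k x, continuous (fun t => it T M0 a c d p s0 n t k) x.
Proof.
  destruct H as (HT & Heta & HM & Hb & Hc & Hpc & Hpb & Hs0).
  induction n; intros k x; destruct k; simpl.
  - apply cmult. apply cexpl. auto.
  - apply cconst.
  - apply cmult. apply cexpl. auto.
  - apply cplus. apply cconst. apply rint_cont. intros y. apply PP_cont. lra.
    intros; apply Hc; lia. auto.
Qed.

Lemma it_bd T eta M0 a c d p s0 (H : ODEH T eta M0 a c d p s0) :
  forall n k t, 0 <= t <= T -> 0 <= it T M0 a c d p s0 n t k <= eta * exp (M0 * t).
Proof.
  pose proof (it_cont _ _ _ _ _ _ _ _ H) as Hcont.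
  destruct H as (HT & Heta & HM & Hb & Hc & Hpc & Hpb & Hs0).
  assert (He : forall t, 0 <= t -> 1 <= exp (M0 * t)) by (intros; apply exp_ge1; nra).
  induction n; intros k t Ht; destruct k; simpl.
  - pose proof (Hpb t). pose proof (exp_pos (M0*t)). split. nra. rewrite Rmult_comm. nra.
  - pose proof (Hs0 (S k) ltac:(lia)). pose proof (He t ltac:(lra)). nra.
  - pose proof (Hpb t). pose proof (exp_pos (M0*t)). split. nra. rewrite Rmult_comm. nra.
  - set (u := it T M0 a c d p s0 n).
    assert (Hex : ex_RInt (fun x => PP M0 a c d u (cl T x) (S k)) 0 t).
    { apply rint_ex. intros y. apply PP_cont. lra. intros; apply Hc; lia. apply Hcont. }
    assert (Hpt : forall x, 0 <= x <= t -> 0 <= PP M0 a c d u (cl T x) (S k) <= M0 * eta * exp (M0 * x)).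
    { intros x Hx. rewrite cl_id by lra. unfold PP.
      destruct (Hb (S k) x ltac:(lia)) as (Ha & Hcc & Hd & Hs).
      pose proof (IHn (S (S k)) x ltac:(lra)). pose proof (IHn (pred (S k)) x ltac:(lra)).
      pose proof (IHn (S k) x ltac:(lra)). fold u in H, H0, H1.
      apply Rabs_le_between in Hd.
      set (E := eta * exp (M0 * x)) in *.
      assert (0 <= E) by (unfold E; pose proof (exp_pos (M0*x)); nra).
      split.
      + assert (0 <= a (S k) x * u x (S (S k))) by nra.
        assert (0 <= c (S k) x * u x (pred (S k))) by nra.
        assert (0 <= (d (S k) x + M0) * u x (S k)) by nra. lra.
      + assert (a (S k) x * u x (S (S k)) <= a (S k) x * E) by nra.
        assert (c (S k) x * u x (pred (S k)) <= c (S k) x * E) by nra.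
        assert ((d (S k) x + M0) * u x (S k) <= (d (S k) x + M0) * E) by nra.
        unfold E in *. nra. }
    split.
    + pose proof (Hs0 (S k) ltac:(lia)).
      assert (0 <= RInt (fun x => PP M0 a c d u (cl T x) (S k)) 0 t).
      { apply RInt_ge_0; auto. lra. intros; apply Hpt; lra. }
      lra.
    + assert (RInt (fun x => PP M0 a c d u (cl T x) (S k)) 0 t <=
              RInt (fun x => M0 * eta * exp (M0 * x)) 0 t).
      { apply RInt_le; auto. lra. apply rint_ex. intros; apply cmult. apply cconst. apply cexpl.
        intros; apply Hpt; lra. }
      rewrite rint_exp in H. pose proof (Hs0 (S k) ltac:(lia)). lra.
Qed.


Lemma is_derive_eq (f : R -> R) (x l1 l2 : R) : is_derive f x l1 -> l1 = l2 -> is_derive f x l2.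
Proof. intros; subst; auto. Qed.

Lemma drv_minus (f g : R -> R) x a b : is_derive f x a -> is_derive g x b ->
  is_derive (fun t => f t - g t) x (a - b).
Proof. intros. apply (is_derive_minus f g x a b); auto. Qed.
Lemma drv_plus (f g : R -> R) x a b : is_derive f x a -> is_derive g x b ->
  is_derive (fun t => f t + g t) x (a + b).
Proof. intros. apply (is_derive_plus f g x a b); auto. Qed.
Lemma drv_cplus (f : R -> R) c x a : is_derive f x a -> is_derive (fun t => c + f t) x a.
Proof. intros. eapply is_derive_eq. apply (drv_plus (fun _ => c) f x 0 a); auto.
  apply (is_derive_const (K:=R_AbsRing) (V:=R_NormedModule)). change (0 + a = a). ring. Qed.
Lemma drv_mult (f g : R -> R) x a b : is_derive f x a -> is_derive g x b ->
  is_derive (fun t => f t * g t) x (a * g x + f x * b).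
Proof. intros. apply (is_derive_mult f g x a b); auto. intros; apply Rmult_comm. Qed.

Lemma exp_mono x y : x <= y -> exp x <= exp y.
Proof. intros [H|H]. left; apply exp_increasing; auto. subst; lra. Qed.

Lemma it_diff T eta M0 a c d p s0 (H : ODEH T eta M0 a c d p s0) :
  forall n k t, 0 <= t <= T ->
  Rabs (it T M0 a c d p s0 (S n) t k - it T M0 a c d p s0 n t k)
    <= eta * exp (M0 * T) * (/2)^n * exp (2 * (4 * M0 + 1) * t).
Proof.
  pose proof (it_cont _ _ _ _ _ _ _ _ H) as Hcont.
  pose proof (it_bd _ _ _ _ _ _ _ _ H) as Hbd.
  destruct H as (HT & Heta & HM & Hb & Hc & Hpc & Hpb & Hs0).
  set (L := 4 * M0 + 1). assert (HL : 0 < L) by (unfold L; lra).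
  induction n; intros k t Ht.
  - pose proof (Hbd 1%nat k t Ht). pose proof (Hbd 0%nat k t Ht).
    assert (exp (M0 * t) <= exp (M0 * T)) by (apply exp_mono; nra).
    assert (1 <= exp (2 * L * t)) by (apply exp_ge1; nra).
    assert (eta * exp (M0 * t) <= eta * exp (M0 * T)) by nra.
    pose proof (exp_pos (M0 * T)).
    assert (eta * exp (M0 * T) * 1 <= eta * exp (M0 * T) * exp (2 * L * t)).
    { apply Rmult_le_compat_l; auto. apply Rmult_le_pos; lra. }
    simpl pow. rewrite Rmult_1_r. apply Rabs_le_between. split; lra.
  - destruct k.
    { replace (_ - _) with 0 by (simpl; ring). rewrite Rabs_R0.
      pose proof (exp_pos (M0*T)). pose proof (exp_pos (2*L*t)).
      pose proof (pow_lt (/2) (S n) ltac:(lra)). apply Rmult_le_pos; [|lra].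
      apply Rmult_le_pos; [|lra]. nra. }
    set (u1 := it T M0 a c d p s0 (S n)). set (u0 := it T M0 a c d p s0 n).
    set (F1 := fun x => PP M0 a c d u1 (cl T x) (S k)).
    set (F0 := fun x => PP M0 a c d u0 (cl T x) (S k)).
    assert (HF1 : forall x, continuous F1 x).
    { intros; apply PP_cont. lra. intros; apply Hc; lia. apply Hcont. }
    assert (HF0 : forall x, continuous F0 x).
    { intros; apply PP_cont. lra. intros; apply Hc; lia. apply Hcont. }
    assert (Hg := growth (fun t => it T M0 a c d p s0 (S (S n)) t (S k) - u1 t (S k))
                 (fun x => F1 x - F0 x) T L (eta * exp (M0 * T) * (/2) ^ (S n)) HL).
    replace (eta * exp (M0 * T) * (/ 2) ^ S n * exp (2 * (4 * M0 + 1) * t)) with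
        (eta * exp (M0 * T) * (/ 2) ^ S n * exp (2 * L * t)) by reflexivity.
    apply Hg; auto.
    + pose proof (exp_pos (M0*T)). pose proof (pow_lt (/2) (S n) ltac:(lra)).
      apply Rmult_le_pos; nra.
    + intros x. apply cminus. apply Hcont. apply Hcont.
    + unfold u1. simpl. rewrite !RInt_point. apply Rminus_diag_eq. reflexivity.
    + intros x Hx. unfold u1. apply drv_minus; simpl; apply drv_cplus; apply rint_deriv; auto.
    + intros x Hx. unfold F1, F0, PP. rewrite cl_id by lra.
      destruct (Hb (S k) x ltac:(lia)) as (Ha & Hcc & Hd & Hs).
      set (Q := eta * exp (M0 * T) * (/ 2) ^ n * exp (2 * L * x)).
      assert (D1 := IHn (S (S k)) x ltac:(lra)). assert (D2 := IHn (pred (S k)) x ltac:(lra)).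
      assert (D3 := IHn (S k) x ltac:(lra)). fold u1 u0 L Q in D1, D2, D3.
      replace (a (S k) x * u1 x (S (S k)) + c (S k) x * u1 x (pred (S k)) + (d (S k) x + M0) * u1 x (S k) -
       (a (S k) x * u0 x (S (S k)) + c (S k) x * u0 x (pred (S k)) + (d (S k) x + M0) * u0 x (S k)))
       with (a (S k) x * (u1 x (S (S k)) - u0 x (S (S k))) + c (S k) x * (u1 x (pred (S k)) - u0 x (pred (S k)))
             + (d (S k) x + M0) * (u1 x (S k) - u0 x (S k))) by ring.
      apply Rabs_le_between in Hd.
      assert (E1 : Rabs (a (S k) x * (u1 x (S (S k)) - u0 x (S (S k)))) <= M0 * Q).
      { rewrite Rabs_mult. rewrite (Rabs_right (a _ _)) by lra. apply Rmult_le_compat; auto; try lra. apply Rabs_pos. }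
      assert (E2 : Rabs (c (S k) x * (u1 x (pred (S k)) - u0 x (pred (S k)))) <= M0 * Q).
      { rewrite Rabs_mult. rewrite (Rabs_right (c _ _)) by lra. apply Rmult_le_compat; auto; try lra. apply Rabs_pos. }
      assert (E3 : Rabs ((d (S k) x + M0) * (u1 x (S k) - u0 x (S k))) <= 2 * M0 * Q).
      { rewrite Rabs_mult. rewrite (Rabs_right (d _ _ + M0)) by lra. apply Rmult_le_compat; auto; try lra. apply Rabs_pos. }
      assert (HQ : 0 <= Q) by (eapply Rle_trans; [apply Rabs_pos|apply D3]).
      eapply Rle_trans. apply Rabs_triang. eapply Rle_trans. apply Rplus_le_compat_r. apply Rabs_triang.
      unfold Q in *. simpl pow. unfold L in *. nra.
Qed.


Lemma lim_near (x : nat -> R) (l : R) n B : is_lim_seq x l ->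
  (forall m, Rabs (x (m + n)%nat - x n) <= B) -> Rabs (l - x n) <= B.
Proof.
  intros Hl Hb. destruct (Rle_dec (Rabs (l - x n)) B) as [|Hn]; auto. exfalso.
  apply is_lim_seq_spec in Hl. assert (He : 0 < Rabs (l - x n) - B) by lra.
  destruct (Hl (mkposreal _ He)) as [N HN]. simpl in HN.
  specialize (HN (N + n)%nat ltac:(lia)). specialize (Hb N).
  pose proof (Rabs_triang (l - x (N+n)%nat) (x (N+n)%nat - x n)).
  replace (l - x (N + n)%nat + (x (N + n)%nat - x n)) with (l - x n) in H by ring.
  rewrite Rabs_minus_sym in HN. lra.
Qed.

Lemma lim_bnd (x : nat -> R) (l lo hi : R) : is_lim_seq x l ->
  (forall m, lo <= x m <= hi) -> lo <= l <= hi.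
Proof.
  intros Hl Hb. apply is_lim_seq_spec in Hl.
  destruct (Rle_dec lo l); destruct (Rle_dec l hi); auto; exfalso.
  - assert (He : 0 < l - hi) by lra. destruct (Hl (mkposreal _ He)) as [N HN]. simpl in HN.
    specialize (HN N (le_n _)). specialize (Hb N). apply Rabs_lt_between in HN. lra.
  - assert (He : 0 < lo - l) by lra. destruct (Hl (mkposreal _ He)) as [N HN]. simpl in HN.
    specialize (HN N (le_n _)). specialize (Hb N). apply Rabs_lt_between in HN. lra.
  - assert (He : 0 < lo - l) by lra. destruct (Hl (mkposreal _ He)) as [N HN]. simpl in HN.
    specialize (HN N (le_n _)). specialize (Hb N). apply Rabs_lt_between in HN. lra.
Qed.

Lemma half_small C : 0 <= C -> forall e, 0 < e -> exists N, C * (/2)^N < e.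
Proof.
  intros HC e He. destruct (pow_lt_1_zero (/2) ltac:(rewrite Rabs_right; lra) (e / (C + 1)) ltac:(apply Rdiv_lt_0_compat; lra)) as [N HN].
  exists N. specialize (HN N (le_n _)). rewrite Rabs_right in HN by (left; apply pow_lt; lra).
  assert (0 < (/2)^N) by (apply pow_lt; lra).
  assert ((C+1) * (/2)^N < e). { apply Rmult_lt_compat_l with (r := C+1) in HN; [|lra].
    replace ((C+1) * (e / (C+1))) with e in HN by (field; lra). lra. }
  nra.
Qed.

Definition GG T eta M0 := eta * exp (M0 * T) * exp (2 * (4 * M0 + 1) * T).

Lemma it_diff2 T eta M0 a c d p s0 (H : ODEH T eta M0 a c d p s0) :
  forall n k t, 0 <= t <= T ->
  Rabs (it T M0 a c d p s0 (S n) t k - it T M0 a c d p s0 n t k) <= GG T eta M0 * (/2)^n.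
Proof.
  intros n k t Ht. eapply Rle_trans. apply (it_diff _ _ _ _ _ _ _ _ H); auto.
  destruct H as (HT & Heta & HM & _).
  unfold GG. assert (exp (2 * (4 * M0 + 1) * t) <= exp (2 * (4 * M0 + 1) * T)) by (apply exp_mono; nra).
  pose proof (exp_pos (M0 * T)). pose proof (pow_lt (/2) n ltac:(lra)).
  assert (0 <= eta * exp (M0 * T) * (/2)^n) by (apply Rmult_le_pos; [apply Rmult_le_pos|]; lra).
  replace (eta * exp (M0 * T) * exp (2 * (4 * M0 + 1) * T) * (/ 2) ^ n) with
    (eta * exp (M0 * T) * (/2)^n * exp (2 * (4 * M0 + 1) * T)) by ring.
  apply Rmult_le_compat_l; auto.
Qed.

Lemma it_cauchy T eta M0 a c d p s0 (H : ODEH T eta M0 a c d p s0) :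
  forall m n k t, 0 <= t <= T ->
  Rabs (it T M0 a c d p s0 (m + n) t k - it T M0 a c d p s0 n t k)
    <= 2 * GG T eta M0 * ((/2)^n - (/2)^(m + n)).
Proof.
  induction m; intros n k t Ht.
  - simpl. replace (_ - _) with 0 by ring. rewrite Rabs_R0. lra.
  - pose proof (it_diff2 _ _ _ _ _ _ _ _ H (m + n) k t Ht).
    specialize (IHm n k t Ht).
    replace (S m + n)%nat with (S (m + n)) by lia.
    pose proof (Rabs_triang (it T M0 a c d p s0 (S (m + n)) t k - it T M0 a c d p s0 (m + n) t k)
      (it T M0 a c d p s0 (m + n) t k - it T M0 a c d p s0 n t k)).
    replace (it T M0 a c d p s0 (S (m + n)) t k - it T M0 a c d p s0 (m + n) t k +
      (it T M0 a c d p s0 (m + n) t k - it T M0 a c d p s0 n t k)) with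
      (it T M0 a c d p s0 (S (m + n)) t k - it T M0 a c d p s0 n t k) in H1 by ring.
    simpl pow at 2. lra.
Qed.

Lemma GG_pos T eta M0 a c d p s0 (H : ODEH T eta M0 a c d p s0) : 0 < GG T eta M0.
Proof. destruct H as (HT & Heta & HM & _). unfold GG.
  pose proof (exp_pos (M0 * T)). pose proof (exp_pos (2 * (4 * M0 + 1) * T)).
  apply Rmult_lt_0_compat; auto. apply Rmult_lt_0_compat; auto. Qed.

Lemma it_cauchy2 T eta M0 a c d p s0 (H : ODEH T eta M0 a c d p s0) :
  forall m n k t, 0 <= t <= T ->
  Rabs (it T M0 a c d p s0 (m + n) t k - it T M0 a c d p s0 n t k) <= 2 * GG T eta M0 * (/2)^n.
Proof.
  intros. eapply Rle_trans. apply (it_cauchy _ _ _ _ _ _ _ _ H); auto.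
  pose proof (GG_pos _ _ _ _ _ _ _ _ H). pose proof (pow_lt (/2) (m+n) ltac:(lra)). nra.
Qed.

Definition ulim T M0 a c d p s0 (t : R) (k : nat) : R :=
  match k with
  | O => exp (M0 * t) * p t
  | _ => real (Lim_seq (fun n => it T M0 a c d p s0 n t k))
  end.

Lemma ulim_lim T eta M0 a c d p s0 (H : ODEH T eta M0 a c d p s0) :
  forall k t, 0 <= t <= T -> is_lim_seq (fun n => it T M0 a c d p s0 n t k) (ulim T M0 a c d p s0 t k).
Proof.
  intros k t Ht. destruct k.
  - simpl. apply is_lim_seq_ext with (u := fun _ => exp (M0 * t) * p t).
    intros n; destruct n; reflexivity. apply is_lim_seq_const.
  - unfold ulim. 
    assert (Hex : ex_finite_lim_seq (fun n => it T M0 a c d p s0 n t (S k))).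
    { apply ex_lim_seq_cauchy_corr. intros eps.
      destruct (half_small (4 * GG T eta M0) ltac:(pose proof (GG_pos _ _ _ _ _ _ _ _ H); lra) eps (cond_pos eps)) as [N HN].
      exists N. intros n m Hn Hm.
      pose proof (it_cauchy2 _ _ _ _ _ _ _ _ H (n - N) N (S k) t Ht).
      pose proof (it_cauchy2 _ _ _ _ _ _ _ _ H (m - N) N (S k) t Ht).
      replace (n - N + N)%nat with n in H0 by lia. replace (m - N + N)%nat with m in H1 by lia.
      pose proof (Rabs_triang (it T M0 a c d p s0 n t (S k) - it T M0 a c d p s0 N t (S k))
                 (it T M0 a c d p s0 N t (S k) - it T M0 a c d p s0 m t (S k))).
      rewrite (Rabs_minus_sym (it T M0 a c d p s0 N t (S k))) in H2.
      replace (it T M0 a c d p s0 n t (S k) - it T M0 a c d p s0 N t (S k) +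
        (it T M0 a c d p s0 N t (S k) - it T M0 a c d p s0 m t (S k))) with
        (it T M0 a c d p s0 n t (S k) - it T M0 a c d p s0 m t (S k)) in H2 by ring.
      lra. }
    destruct Hex as [l Hl]. rewrite (is_lim_seq_unique _ _ Hl). simpl. exact Hl.
Qed.

Lemma ulim_near T eta M0 a c d p s0 (H : ODEH T eta M0 a c d p s0) :
  forall n k t, 0 <= t <= T ->
  Rabs (ulim T M0 a c d p s0 t k - it T M0 a c d p s0 n t k) <= 2 * GG T eta M0 * (/2)^n.
Proof.
  intros n k t Ht. apply (lim_near (fun m => it T M0 a c d p s0 m t k)). apply (ulim_lim _ _ _ _ _ _ _ _ H); auto.
  intros m. apply (it_cauchy2 _ _ _ _ _ _ _ _ H); auto.
Qed.

Lemma ulim_bd T eta M0 a c d p s0 (H : ODEH T eta M0 a c d p s0) :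
  forall k t, 0 <= t <= T -> 0 <= ulim T M0 a c d p s0 t k <= eta * exp (M0 * t).
Proof.
  intros k t Ht. apply (lim_bnd (fun n => it T M0 a c d p s0 n t k)).
  apply (ulim_lim _ _ _ _ _ _ _ _ H); auto.
  intros m. apply (it_bd _ _ _ _ _ _ _ _ H); auto.
Qed.

Lemma ulim_cont T eta M0 a c d p s0 (H : ODEH T eta M0 a c d p s0) :
  forall k x, continuous (fun t => ulim T M0 a c d p s0 (cl T t) k) x.
Proof.
  intros k x. pose proof H as H'. destruct H' as (HT & _).
  apply cont_of_eps. intros e He.
  destruct (half_small (2 * GG T eta M0) ltac:(pose proof (GG_pos _ _ _ _ _ _ _ _ H); lra) (e/3) ltac:(lra)) as [N HN].
  assert (Hc := it_cont _ _ _ _ _ _ _ _ H N k).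
  destruct (eps_of_cont (fun t => it T M0 a c d p s0 N (cl T t) k) x
     (ccl (fun t => it T M0 a c d p s0 N t k) T x ltac:(lra) Hc) (e/3) ltac:(lra)) as [dl [Hdl Hy]].
  exists dl. split; auto. intros y Hyx. specialize (Hy y Hyx).
  pose proof (ulim_near _ _ _ _ _ _ _ _ H N k (cl T y) (cl_in T y ltac:(lra))).
  pose proof (ulim_near _ _ _ _ _ _ _ _ H N k (cl T x) (cl_in T x ltac:(lra))).
  apply Rabs_lt_between in Hy. apply Rabs_le_between in H0. apply Rabs_le_between in H1.
  apply Rabs_lt_between. lra.
Qed.


Lemma PP_diff T eta M0 a c d p s0 (H : ODEH T eta M0 a c d p s0) (u1 u2 : R -> nat -> R) y k Q :
  (1 <= k)%nat -> (forall j, Rabs (u1 y j - u2 y j) <= Q) ->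
  Rabs (PP M0 a c d u1 y k - PP M0 a c d u2 y k) <= 4 * M0 * Q.
Proof.
  intros Hk HQ. destruct H as (HT & Heta & HM & Hb & _).
  destruct (Hb k y Hk) as (Ha & Hcc & Hd & Hs). unfold PP.
  replace (a k y * u1 y (S k) + c k y * u1 y (pred k) + (d k y + M0) * u1 y k -
    (a k y * u2 y (S k) + c k y * u2 y (pred k) + (d k y + M0) * u2 y k)) with
    (a k y * (u1 y (S k) - u2 y (S k)) + c k y * (u1 y (pred k) - u2 y (pred k))
      + (d k y + M0) * (u1 y k - u2 y k)) by ring.
  apply Rabs_le_between in Hd.
  assert (D1 := HQ (S k)). assert (D2 := HQ (pred k)). assert (D3 := HQ k).
  assert (E1 : Rabs (a k y * (u1 y (S k) - u2 y (S k))) <= M0 * Q).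
  { rewrite Rabs_mult. rewrite (Rabs_right (a _ _)) by lra. apply Rmult_le_compat; auto; try lra. apply Rabs_pos. }
  assert (E2 : Rabs (c k y * (u1 y (pred k) - u2 y (pred k))) <= M0 * Q).
  { rewrite Rabs_mult. rewrite (Rabs_right (c _ _)) by lra. apply Rmult_le_compat; auto; try lra. apply Rabs_pos. }
  assert (E3 : Rabs ((d k y + M0) * (u1 y k - u2 y k)) <= 2 * M0 * Q).
  { rewrite Rabs_mult. rewrite (Rabs_right (d _ _ + M0)) by lra. apply Rmult_le_compat; auto; try lra. apply Rabs_pos. }
  eapply Rle_trans. apply Rabs_triang. eapply Rle_trans. apply Rplus_le_compat_r. apply Rabs_triang.
  lra.
Qed.

Definition uc T M0 a c d p s0 (t : R) (k : nat) : R := ulim T M0 a c d p s0 (cl T t) k.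
Definition Fu T M0 a c d p s0 (k : nat) (x : R) : R :=
  PP M0 a c d (uc T M0 a c d p s0) (cl T x) k.

Lemma Fu_cont T eta M0 a c d p s0 (H : ODEH T eta M0 a c d p s0) k x :
  (1 <= k)%nat -> continuous (Fu T M0 a c d p s0 k) x.
Proof.
  intros Hk. pose proof H as H'. destruct H' as (HT & _ & _ & _ & Hc & _).
  apply PP_cont. lra. intros; apply Hc; auto. intros j y. apply (ulim_cont _ _ _ _ _ _ _ _ H).
Qed.

Lemma ulim_eq T eta M0 a c d p s0 (H : ODEH T eta M0 a c d p s0) k t :
  (1 <= k)%nat -> 0 <= t <= T ->
  ulim T M0 a c d p s0 t k = s0 k + RInt (Fu T M0 a c d p s0 k) 0 t.
Proof.
  intros Hk Ht. pose proof H as H'. destruct H' as (HT & Heta & HM & Hb & Hc & _).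
  set (X := ulim T M0 a c d p s0 t k - s0 k - RInt (Fu T M0 a c d p s0 k) 0 t).
  set (G := GG T eta M0). assert (HG : 0 < G) by apply (GG_pos _ _ _ _ _ _ _ _ H).
  assert (HX : forall n, Rabs X <= (2 * G + 8 * T * M0 * G) * (/2)^n).
  { intros n.
    set (Fn := fun x => PP M0 a c d (it T M0 a c d p s0 n) (cl T x) k).
    assert (Hit : it T M0 a c d p s0 (S n) t k = s0 k + RInt Fn 0 t).
    { destruct k. lia. reflexivity. }
    assert (HFn : forall x, continuous Fn x).
    { intros; apply PP_cont. lra. intros; apply Hc; auto. apply (it_cont _ _ _ _ _ _ _ _ H). }
    assert (Hm : RInt (fun x => Fn x - Fu T M0 a c d p s0 k x) 0 t =
                 RInt Fn 0 t - RInt (Fu T M0 a c d p s0 k) 0 t).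
    { apply (RInt_minus (V:=R_CompleteNormedModule)); apply rint_ex; auto.
      intros; apply (Fu_cont _ _ _ _ _ _ _ _ H); auto. }
    assert (Hbd : Rabs (RInt (fun x => Fn x - Fu T M0 a c d p s0 k x) 0 t) <= (t - 0) * (4 * M0 * (2 * G * (/2)^n))).
    { apply abs_RInt_le_const. lra. apply rint_ex. intros; apply cminus; auto.
      apply (Fu_cont _ _ _ _ _ _ _ _ H); auto.
      intros x Hx. unfold Fn, Fu. rewrite Rabs_minus_sym. apply (PP_diff _ _ _ _ _ _ _ _ H); auto.
      intros j. unfold uc. rewrite (cl_id T (cl T x)) by (apply cl_in; lra).
      apply (ulim_near _ _ _ _ _ _ _ _ H). apply cl_in; lra. }
    pose proof (ulim_near _ _ _ _ _ _ _ _ H (S n) k t Ht). fold G in H0. rewrite Hit in H0.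
    replace X with ((ulim T M0 a c d p s0 t k - (s0 k + RInt Fn 0 t)) +
                    RInt (fun x => Fn x - Fu T M0 a c d p s0 k x) 0 t) by (rewrite Hm; unfold X; ring).
    eapply Rle_trans. apply Rabs_triang.
    pose proof (pow_lt (/2) n ltac:(lra)).
    assert (t * (4 * M0 * (2 * G * (/2)^n)) <= T * (4 * M0 * (2 * G * (/2)^n))).
    { apply Rmult_le_compat_r; [|lra]. assert (0 <= G * (/2)^n) by (apply Rmult_le_pos; lra). nra. }
    simpl pow in H0. rewrite Rminus_0_r in Hbd.
    set (P := (/2)^n) in *.
    replace (2 * G * (/ 2 * P)) with (G * P) in H0 by field.
    replace (T * (4 * M0 * (2 * G * P))) with (8 * T * M0 * G * P) in H1 by ring.
    replace ((2 * G + 8 * T * M0 * G) * P) with (2 * (G * P) + 8 * T * M0 * G * P) by ring.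
    assert (0 <= G * P) by nra. lra. }
  destruct (Req_dec X 0) as [HX0|HX0]. unfold X in HX0; lra.
  exfalso. assert (Hp : 0 < Rabs X) by (apply Rabs_pos_lt; auto).
  assert (0 <= T * M0 * G) by (apply Rmult_le_pos; [apply Rmult_le_pos|]; lra).
  destruct (half_small (2 * G + 8 * T * M0 * G) ltac:(nra) (Rabs X) Hp) as [N HN].
  specialize (HX N). lra.
Qed.


Definition sol T M0 a c d p s0 (t : R) (k : nat) : R :=
  match k with
  | O => p t
  | _ => exp (- M0 * t) * (s0 k + RInt (Fu T M0 a c d p s0 k) 0 t)
  end.

Lemma sol_u T eta M0 a c d p s0 (H : ODEH T eta M0 a c d p s0) k t : 0 <= t <= T ->
  ulim T M0 a c d p s0 t k = exp (M0 * t) * sol T M0 a c d p s0 t k.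
Proof.
  intros Ht. assert (HE : exp (M0 * t) * exp (- M0 * t) = 1).
  { rewrite <- exp_plus. replace (M0 * t + - M0 * t) with 0 by ring. apply exp_0. }
  destruct k. reflexivity.
  rewrite (ulim_eq _ _ _ _ _ _ _ _ H) by (auto; lia). simpl.
  rewrite <- Rmult_assoc, HE. ring.
Qed.

Lemma ode_exists T eta M0 a c d p s0 (H : ODEH T eta M0 a c d p s0) :
  exists s : R -> nat -> R,
    (forall t, s t 0%nat = p t) /\
    (forall k, (1 <= k)%nat -> s 0 k = s0 k) /\
    (forall k t, (1 <= k)%nat -> 0 <= t <= T ->
       is_derive (fun x => s x k) t (a k t * s t (S k) + c k t * s t (pred k) + d k t * s t k)) /\
    (forall k x, (1 <= k)%nat -> continuous (fun t => s t k) x) /\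
    (forall k t, 0 <= t <= T -> 0 <= s t k <= eta).
Proof.
  pose proof H as H'. destruct H' as (HT & Heta & HM & Hb & Hc & Hpc & Hpb & Hs0).
  assert (Hder : forall k t, (1 <= k)%nat -> is_derive (fun x => sol T M0 a c d p s0 x k) t
      ((- M0 * exp (- M0 * t)) * (s0 k + RInt (Fu T M0 a c d p s0 k) 0 t)
       + exp (- M0 * t) * Fu T M0 a c d p s0 k t)).
  { intros k t Hk. destruct k. lia. simpl.
    apply (drv_mult (fun x => exp (- M0 * x)) (fun x => s0 (S k) + RInt (Fu T M0 a c d p s0 (S k)) 0 x)).
    auto_derive; auto. ring.
    apply drv_cplus. apply rint_deriv. intros; apply (Fu_cont _ _ _ _ _ _ _ _ H); auto. }
  exists (sol T M0 a c d p s0). split; [|split; [|split; [|split]]].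
  - reflexivity.
  - intros k Hk. destruct k. lia. simpl. rewrite RInt_point.
    replace (- M0 * 0) with 0 by ring. rewrite exp_0. change (1 * (s0 (S k) + 0) = s0 (S k)). ring.
  - intros k t Hk Ht. eapply is_derive_eq. apply Hder; auto.
    assert (HE : exp (- M0 * t) * exp (M0 * t) = 1).
    { rewrite <- exp_plus. replace (- M0 * t + M0 * t) with 0 by ring. apply exp_0. }
    assert (HF : Fu T M0 a c d p s0 k t = a k t * (exp (M0 * t) * sol T M0 a c d p s0 t (S k))
       + c k t * (exp (M0 * t) * sol T M0 a c d p s0 t (pred k))
       + (d k t + M0) * (exp (M0 * t) * sol T M0 a c d p s0 t k)).
    { unfold Fu, PP, uc. rewrite !(cl_id T t) by auto.
      rewrite <- (sol_u _ _ _ _ _ _ _ _ H (S k) t Ht), <- (sol_u _ _ _ _ _ _ _ _ H (pred k) t Ht),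
        <- (sol_u _ _ _ _ _ _ _ _ H k t Ht). reflexivity. }
    assert (HY : s0 k + RInt (Fu T M0 a c d p s0 k) 0 t = exp (M0 * t) * sol T M0 a c d p s0 t k).
    { rewrite <- (sol_u _ _ _ _ _ _ _ _ H k t Ht). rewrite (ulim_eq _ _ _ _ _ _ _ _ H); auto. }
    rewrite HF, HY.
    set (E := exp (M0 * t)) in *. set (Em := exp (- M0 * t)) in *.
    replace (- M0 * Em * (E * sol T M0 a c d p s0 t k) +
      Em * (a k t * (E * sol T M0 a c d p s0 t (S k)) + c k t * (E * sol T M0 a c d p s0 t (pred k)) +
       (d k t + M0) * (E * sol T M0 a c d p s0 t k))) with
      ((Em * E) * (a k t * sol T M0 a c d p s0 t (S k) + c k t * sol T M0 a c d p s0 t (pred k) +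
       d k t * sol T M0 a c d p s0 t k)) by ring.
    rewrite HE. apply Rmult_1_l.
  - intros k x Hk. apply dcont. eexists. apply Hder; auto.
  - intros k t Ht. destruct k. simpl. auto.
    pose proof (ulim_bd _ _ _ _ _ _ _ _ H (S k) t Ht).
    rewrite (sol_u _ _ _ _ _ _ _ _ H) in H0 by auto.
    pose proof (exp_pos (M0 * t)). split; nra.
Qed.

Lemma loc_cl T x : 0 < x < T -> locally x (fun y => cl T y = y).
Proof.
  intros Hx. assert (He : 0 < Rmin x (T - x)) by (apply Rmin_pos; lra).
  exists (mkposreal _ He). intros y Hy. simpl in Hy.
  change (Rabs (y - x) < Rmin x (T - x)) in Hy.
  apply cl_id. apply Rabs_lt_between in Hy.
  pose proof (Rmin_l x (T - x)). pose proof (Rmin_r x (T - x)). lra.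
Qed.

Lemma ode_unique T eta M0 a c d p s0 (H : ODEH T eta M0 a c d p s0) (w : R -> nat -> R) :
  (forall t, 0 <= t <= T -> w t 0%nat = 0) ->
  (forall k, (1 <= k)%nat -> w 0 k = 0) ->
  (forall k t, (1 <= k)%nat -> 0 < t < T ->
     is_derive (fun x => w x k) t (a k t * w t (S k) + c k t * w t (pred k) + d k t * w t k)) ->
  (forall k x, (1 <= k)%nat -> continuous (fun t => w (cl T t) k) x) ->
  (exists Mb, forall t k, 0 <= t <= T -> Rabs (w t k) <= Mb) ->
  forall t k, 0 <= t <= T -> w t k = 0.
Proof.
  intros Hw0 Hwi Hd Hcw [Mb HMb].
  pose proof H as H'. destruct H' as (HT & Heta & HM & Hb & Hc & Hpc & Hpb & Hs0).
  set (L := 4 * M0 + 1). assert (HL : 0 < L) by (unfold L; lra).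
  set (Mb' := Rmax Mb 0). assert (HMb' : 0 <= Mb') by apply Rmax_r.
  assert (Claim : forall n t k, 0 <= t <= T -> Rabs (w t k) <= Mb' * (/2)^n * exp (2 * L * t)).
  { induction n; intros t k Ht.
    - simpl. rewrite Rmult_1_r. pose proof (HMb t k Ht).
      assert (Mb <= Mb') by apply Rmax_l.
      assert (1 <= exp (2 * L * t)) by (apply exp_ge1; nra). nra.
    - destruct k.
      { rewrite Hw0 by auto. rewrite Rabs_R0. pose proof (exp_pos (2*L*t)).
        pose proof (pow_lt (/2) (S n) ltac:(lra)). apply Rmult_le_pos; [|lra]. nra. }
      cut (forall t, 0 <= t <= T -> Rabs (w (cl T t) (S k)) <= Mb' * (/2)^(S n) * exp (2 * L * t)).
      { intros Hg. specialize (Hg t Ht). rewrite cl_id in Hg by auto. exact Hg. }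
      apply (growth (fun x => w (cl T x) (S k))
         (fun x => a (S k) x * w x (S (S k)) + c (S k) x * w x (pred (S k)) + d (S k) x * w x (S k))
         T L (Mb' * (/2)^(S n))); auto.
      + pose proof (pow_lt (/2) (S n) ltac:(lra)). nra.
      + intros x. apply Hcw. lia.
      + rewrite cl_id by lra. apply Hwi. lia.
      + intros x Hx. eapply is_derive_ext_loc. 2: apply Hd; auto; lia.
        apply (filter_imp (fun y => cl T y = y)). intros y Hy. rewrite Hy. reflexivity.
        apply loc_cl; auto.
      + intros x Hx. destruct (Hb (S k) x ltac:(lia)) as (Ha & Hcc & Hdd & _).
        set (Q := Mb' * (/2)^n * exp (2 * L * x)).
        assert (D1 := IHn x (S (S k)) ltac:(lra)). assert (D2 := IHn x (pred (S k)) ltac:(lra)).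
        assert (D3 := IHn x (S k) ltac:(lra)). fold Q in D1, D2, D3.
        assert (E1 : Rabs (a (S k) x * w x (S (S k))) <= M0 * Q).
        { rewrite Rabs_mult. rewrite (Rabs_right (a _ _)) by lra. apply Rmult_le_compat; auto; try lra. apply Rabs_pos. }
        assert (E2 : Rabs (c (S k) x * w x (pred (S k))) <= M0 * Q).
        { rewrite Rabs_mult. rewrite (Rabs_right (c _ _)) by lra. apply Rmult_le_compat; auto; try lra. apply Rabs_pos. }
        assert (E3 : Rabs (d (S k) x * w x (S k)) <= M0 * Q).
        { rewrite Rabs_mult. apply Rmult_le_compat; auto; try apply Rabs_pos. }
        assert (HQ : 0 <= Q) by (eapply Rle_trans; [apply Rabs_pos|apply D3]).
        eapply Rle_trans. apply Rabs_triang. eapply Rle_trans. apply Rplus_le_compat_r. apply Rabs_triang.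
        replace (2 * L * (Mb' * (/ 2) ^ S n) * exp (2 * L * x)) with (L * Q) by (unfold Q; simpl pow; field).
        unfold L. nra. }
  intros t k Ht. destruct (Req_dec (w t k) 0) as [|Hn]; auto. exfalso.
  assert (Hp : 0 < Rabs (w t k)) by (apply Rabs_pos_lt; auto).
  pose proof (exp_pos (2 * L * t)).
  destruct (half_small (Mb' * exp (2 * L * t)) ltac:(nra) _ Hp) as [N HN].
  specialize (Claim N t k Ht). nra.
Qed.


Lemma term_le_series (a : nat -> R) j : (forall n, 0 <= a n) -> ex_series a -> a j <= Series a.
Proof.
  intros Hp Hex. apply Series_correct in Hex.
  assert (Hl : is_lim_seq (sum_n a) (Series a)) by exact Hex.
  assert (Hs : sum_n a j <= Series a).
  { apply (is_lim_seq_incr_compare (sum_n a)); auto. intros n. rewrite sum_Sn.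
    pose proof (Hp (S n)). change (sum_n a n <= sum_n a n + a (S n)). lra. }
  assert (a j <= sum_n a j).
  { rewrite sum_n_Reals. destruct j. simpl. lra. simpl.
    assert (0 <= sum_f_R0 a j). { apply cond_pos_sum. auto. } lra. }
  lra.
Qed.

Lemma left_of_derive (f : R -> R) x l : is_derive f x l -> left_deriv f x l.
Proof.
  intros Hd. apply is_derive_Reals in Hd. unfold left_deriv.
  apply filterlim_locally. intros eps.
  destruct (Hd eps (cond_pos eps)) as [del Hdel].
  exists del. intros y Hy Hyx.
  change (Rabs (y - x) < del) in Hy.
  change (Rabs ((f y - f x) / (y - x) - l) < eps).
  specialize (Hdel (y - x) ltac:(lra) Hy). replace (x + (y - x)) with (y : R) in Hdel by (simpl; lra). exact Hdel.
Qed.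

Lemma holder_cont T beta (psi : R -> R) : 0 <= T -> 0 < beta -> holder T beta psi ->
  forall x, continuous (fun t => psi (cl T t)) x.
Proof.
  intros HT Hbeta [L [HL Hh]] x. apply cont_of_eps. intros e He.
  set (del := exp (ln (e / (L + 1)) / beta)).
  exists del. split. apply exp_pos. intros y Hy.
  destruct (Req_dec (cl T y) (cl T x)) as [Heq|Hne].
  { rewrite Heq. replace (_ - _) with 0 by ring. rewrite Rabs_R0. auto. }
  eapply Rle_lt_trans. apply Hh; try apply cl_in; auto.
  assert (Hpos : 0 < Rabs (cl T y - cl T x)) by (apply Rabs_pos_lt; lra).
  assert (Hlt : Rabs (cl T y - cl T x) < del) by (eapply Rle_lt_trans; [apply cl_lip; auto| auto]).
  assert (Rpower (Rabs (cl T y - cl T x)) beta < e / (L + 1)).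
  { unfold Rpower. rewrite <- (exp_ln (e / (L+1))) by (apply Rdiv_lt_0_compat; lra).
    apply exp_increasing.
    assert (ln (Rabs (cl T y - cl T x)) < ln del) by (apply ln_increasing; auto).
    unfold del in H. rewrite ln_exp in H.
    apply (Rmult_lt_compat_l beta) in H; auto.
    replace (beta * (ln (e / (L + 1)) / beta)) with (ln (e / (L+1))) in H by (field; lra). lra. }
  assert (0 <= Rpower (Rabs (cl T y - cl T x)) beta) by (left; apply exp_pos).
  assert (L * Rpower (Rabs (cl T y - cl T x)) beta <= L * (e / (L+1))) by (apply Rmult_le_compat_l; lra).
  assert (L * (e / (L+1)) < e).
  { apply (Rmult_lt_reg_r (L+1)). lra. replace (L * (e / (L + 1)) * (L + 1)) with (L * e) by (field; lra). nra. }
  lra.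
Qed.

Lemma f_cont h T (f : R -> nat -> R) k : 0 < h -> 0 <= T -> contL2 h T f -> (1 <= k)%nat ->
  forall x, continuous (fun t => f (cl T t) k) x.
Proof.
  intros Hh HT [Hin Hc] Hk x. apply cont_of_eps. intros e He.
  destruct (Hc (cl T x) (cl_in T x HT) (e * sqrt h)) as [del [Hdel Hy]].
  { apply Rmult_lt_0_compat; auto. apply sqrt_lt_R0; auto. }
  exists del. split; auto. intros y Hyx.
  specialize (Hy (cl T y) (cl_in T y HT) ltac:(eapply Rle_lt_trans; [apply cl_lip; auto|auto])).
  unfold L2norm in Hy.
  set (u := fun j => f (cl T y) (S j) - f (cl T x) (S j)).
  assert (Hex : ex_series (fun j => u j ^ 2)).
  { destruct (Hin (cl T y) (cl_in T y HT)) as [l1 H1]. destruct (Hin (cl T x) (cl_in T x HT)) as [l2 H2].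
    apply (ex_series_le (K:=R_AbsRing) (V:=R_CompleteNormedModule) _
       (fun j => 2 * (f (cl T y) (S j)) ^ 2 + 2 * (f (cl T x) (S j)) ^ 2)).
    intros n. change (Rabs (u n ^ 2) <= 2 * f (cl T y) (S n) ^ 2 + 2 * f (cl T x) (S n) ^ 2).
    unfold u. rewrite Rabs_right by (apply Rle_ge; apply pow2_ge_0).
    pose proof (pow2_ge_0 (f (cl T y) (S n) + f (cl T x) (S n))). nra.
    apply (ex_series_plus (K:=R_AbsRing) (V:=R_NormedModule)).
    apply (ex_series_scal (K:=R_AbsRing) (V:=R_NormedModule) 2). eexists; exact H1.
    apply (ex_series_scal (K:=R_AbsRing) (V:=R_NormedModule) 2). eexists; exact H2. }
  pose proof (term_le_series (fun j => u j ^ 2) (pred k) (fun n => pow2_ge_0 (u n)) Hex) as Ht.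
  simpl in Ht. unfold u in Ht. replace (S (pred k)) with k in Ht by lia.
  change (Series (fun k0 : nat => (f (cl T y) (S k0) - f (cl T x) (S k0)) ^ 2)) with (Series (fun j => u j ^ 2)) in Hy.
  set (S2 := Series (fun j => u j ^ 2)) in *.
  assert (HS2 : 0 <= S2) by (eapply Rle_trans; [apply pow2_ge_0| apply Ht]).
  apply (Rmult_le_compat_l h) in Ht; [|lra].
  apply sqrt_le_1_alt in Ht.
  rewrite sqrt_mult_alt in Ht by lra.
  replace ((f (cl T y) k - f (cl T x) k) * ((f (cl T y) k - f (cl T x) k) * 1)) with
    (Rsqr (f (cl T y) k - f (cl T x) k)) in Ht by (unfold Rsqr; ring).
  rewrite sqrt_Rsqr_abs in Ht.
  assert (0 < sqrt h) by (apply sqrt_lt_R0; auto).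
  assert (Ht' : sqrt h * Rabs (f (cl T y) k - f (cl T x) k) <= sqrt (h * S2)) by exact Ht.
  assert (sqrt h * Rabs (f (cl T y) k - f (cl T x) k) < sqrt h * e) by (rewrite (Rmult_comm (sqrt h) e); lra).
  apply Rmult_lt_reg_l in H0; auto.
Qed.


Definition SA (h A B lam T eta beta K cm C0 phimin : R) (psi : R -> R) (c0 : nat -> R)
  (f : R -> nat -> R) : Prop :=
  0 < h /\ A = 1 /\ (B = -1 \/ B = 1) /\ 0 < lam /\ 0 < T /\ 0 < eta /\ 0 < beta /\
  holder T beta psi /\ (forall t, 0 <= t <= T -> 0 <= psi t <= eta) /\ 0 < cm /\
  (forall k, cm <= c0 k <= C0) /\ 0 < phimin /\ (forall c, 0 <= c <= C0 -> phimin <= phi A B c) /\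
  (B = 1 -> eta < 1) /\ condF h T eta psi K f.

Definition Ihat T (f : R -> nat -> R) k t := RInt (fun x => f (cl T x) k) 0 t.
Definition ghat A B lam T c0 f k t := gco A B lam c0 f (cl T t) k.

Lemma cext (f g : R -> R) x : (forall y, f y = g y) -> continuous f x -> continuous g x.
Proof. intros. apply (continuous_ext f g); auto. Qed.
Lemma cdiv (f g : R -> R) x : continuous f x -> continuous g x -> g x <> 0 ->
  continuous (fun t => f t / g t) x.
Proof. intros. apply cmult; auto. apply (continuous_Rinv_comp g); auto. Qed.


Lemma fk_cont h A B lam T eta beta K cm C0 phimin psi c0 f
  (H : SA h A B lam T eta beta K cm C0 phimin psi c0 f) k x :
  continuous (fun t => f (cl T t) k) x.
Proof.
  destruct H as (Hh & HA & HB & Hlam & HT & Heta & Hbeta & Hhol & Hpsi & Hcm & Hc0 & Hphim & Hphi & HB1 & HF).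
  destruct HF as (HK & Hcl2 & _ & _ & _ & Hf0 & Hfpsi & Hfb).
  destruct k.
  - apply (cext (fun t => psi (cl T t))). intros y. rewrite Hfpsi; auto. apply cl_in; lra.
    apply holder_cont with beta; auto. lra.
  - apply f_cont with h; auto. lra. lia.
Qed.

Lemma Ihat_nonneg h A B lam T eta beta K cm C0 phimin psi c0 f
  (H : SA h A B lam T eta beta K cm C0 phimin psi c0 f) k t :
  0 <= Ihat T f k (cl T t).
Proof.
  pose proof (fk_cont _ _ _ _ _ _ _ _ _ _ _ _ _ _ H k) as Hc.
  destruct H as (Hh & HA & HB & Hlam & HT & Heta & Hbeta & Hhol & Hpsi & Hcm & Hc0 & Hphim & Hphi & HB1 & HF).
  destruct HF as (HK & Hcl2 & _ & _ & _ & Hf0 & Hfpsi & Hfb).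
  unfold Ihat. apply RInt_ge_0. apply cl_in; lra. apply rint_ex; auto.
  intros; apply Hf0. apply cl_in; lra.
Qed.

Lemma ghat_eq h A B lam T eta beta K cm C0 phimin psi c0 f
  (H : SA h A B lam T eta beta K cm C0 phimin psi c0 f) k t :
  ghat A B lam T c0 f k t = A * c0 k / (phi A B (c0 k) * exp (lam * A * Ihat T f k (cl T t)) - B * c0 k).
Proof.
  destruct H as (Hh & HA & HB & Hlam & HT & _).
  unfold ghat, gco, Ihat.
  assert (E : RInt (fun tau => f tau k) 0 (cl T t) = RInt (fun x => f (cl T x) k) 0 (cl T t)).
  { apply RInt_ext. intros x Hx.
    pose proof (cl_in T t ltac:(lra)). rewrite Rmin_left in Hx by lra. rewrite Rmax_right in Hx by lra.
    rewrite cl_id; auto. lra. }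
  rewrite E. reflexivity.
Qed.

Lemma den_ge1 h A B lam T eta beta K cm C0 phimin psi c0 f
  (H : SA h A B lam T eta beta K cm C0 phimin psi c0 f) k t :
  1 <= phi A B (c0 k) * exp (lam * A * Ihat T f k (cl T t)) - B * c0 k.
Proof.
  pose proof (Ihat_nonneg _ _ _ _ _ _ _ _ _ _ _ _ _ _ H k t) as HI.
  destruct H as (Hh & HA & HB & Hlam & HT & Heta & Hbeta & Hhol & Hpsi & Hcm & Hc0 & Hphim & Hphi & HB1 & HF).
  assert (He : 1 <= exp (lam * A * Ihat T f k (cl T t))).
  { rewrite <- exp_0. apply (Rle_trans _ _ _ (Rle_refl _)). destruct (Rle_lt_or_eq_dec 0 (lam * A * Ihat T f k (cl T t))).
    subst A. nra. left; apply exp_increasing; auto. rewrite <- e; lra. }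
  pose proof (Hc0 k). pose proof (Hphi (c0 k) ltac:(lra)). unfold phi in *. subst A.
  destruct HB; subst B; nra.
Qed.

Lemma ghat_bd h A B lam T eta beta K cm C0 phimin psi c0 f
  (H : SA h A B lam T eta beta K cm C0 phimin psi c0 f) k t :
  0 < ghat A B lam T c0 f k t <= C0 /\ (B = -1 -> ghat A B lam T c0 f k t <= 1 - phimin).
Proof.
  rewrite (ghat_eq _ _ _ _ _ _ _ _ _ _ _ _ _ _ H).
  pose proof (den_ge1 _ _ _ _ _ _ _ _ _ _ _ _ _ _ H k t) as HD.
  destruct H as (Hh & HA & HB & Hlam & HT & Heta & Hbeta & Hhol & Hpsi & Hcm & Hc0 & Hphim & Hphi & HB1 & HF).
  set (D := phi A B (c0 k) * exp (lam * A * Ihat T f k (cl T t)) - B * c0 k) in *.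
  pose proof (Hc0 k). pose proof (Hphi (c0 k) ltac:(lra)). subst A.
  assert (Hle : 1 * c0 k / D <= c0 k).
  { unfold Rdiv. rewrite Rmult_1_l. rewrite <- (Rmult_1_r (c0 k)) at 2.
    apply Rmult_le_compat_l. lra. rewrite <- Rinv_1. apply Rinv_le_contravar; lra. }
  assert (Hpos : 0 < 1 * c0 k / D) by (apply Rdiv_lt_0_compat; lra).
  split. lra. intros ->. unfold phi in *. lra.
Qed.

Lemma ghat_cont h A B lam T eta beta K cm C0 phimin psi c0 f
  (H : SA h A B lam T eta beta K cm C0 phimin psi c0 f) k x :
  continuous (ghat A B lam T c0 f k) x.
Proof.
  pose proof (fk_cont _ _ _ _ _ _ _ _ _ _ _ _ _ _ H k) as Hc.
  assert (HT : 0 <= T) by (destruct H as (_ & _ & _ & _ & HT & _); lra).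
  apply (cext (fun t => A * c0 k / (phi A B (c0 k) * exp (lam * A * Ihat T f k (cl T t)) - B * c0 k))).
  intros; rewrite (ghat_eq _ _ _ _ _ _ _ _ _ _ _ _ _ _ H); auto.
  apply cdiv. apply cconst.
  apply cminus; [|apply cconst]. apply cmult. apply cconst.
  apply continuous_exp_comp. apply cmult. apply cconst.
  apply (ccl (Ihat T f k)); auto. intros y. unfold Ihat. apply rint_cont. auto.
  pose proof (den_ge1 _ _ _ _ _ _ _ _ _ _ _ _ _ _ H k x). lra.
Qed.


Definition ac h A B lam T c0 f k t :=
  1 / h ^ 2 + B / (2 * (A + B * ghat A B lam T c0 f k t)) *
    ((ghat A B lam T c0 f (S k) t - ghat A B lam T c0 f k t) / h) / h.
Definition cc h A B lam T c0 f k t :=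
  1 / h ^ 2 - B / (2 * (A + B * ghat A B lam T c0 f k t)) *
    ((ghat A B lam T c0 f k t - ghat A B lam T c0 f (pred k) t) / h) / h.
Definition dc h A B lam T c0 (f : R -> nat -> R) k t :=
  - ac h A B lam T c0 f k t - cc h A B lam T c0 f k t
  + lam * ghat A B lam T c0 f k t * (B * f (cl T t) k - 1).

Lemma Apos h A B lam T eta beta K cm C0 phimin psi c0 f
  (H : SA h A B lam T eta beta K cm C0 phimin psi c0 f) k t :
  Rmin 1 phimin <= A + B * ghat A B lam T c0 f k t.
Proof.
  pose proof (ghat_bd _ _ _ _ _ _ _ _ _ _ _ _ _ _ H k t) as [G1 G2].
  destruct H as (Hh & HA & HB & Hlam & HT & Heta & Hbeta & Hhol & Hpsi & Hcm & Hc0 & Hphim & Hphi & HB1 & HF).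
  pose proof (Rmin_l 1 phimin). pose proof (Rmin_r 1 phimin). subst A.
  destruct HB as [-> | ->]. specialize (G2 eq_refl). lra. lra.
Qed.

Lemma ac_form h A B lam T eta beta K cm C0 phimin psi c0 f
  (H : SA h A B lam T eta beta K cm C0 phimin psi c0 f) k t :
  ac h A B lam T c0 f k t = (2 + B * ghat A B lam T c0 f k t + B * ghat A B lam T c0 f (S k) t)
     / (2 * (A + B * ghat A B lam T c0 f k t) * h ^ 2).
Proof.
  pose proof (Apos _ _ _ _ _ _ _ _ _ _ _ _ _ _ H k t) as HP.
  assert (0 < Rmin 1 phimin) by (apply Rmin_pos; [lra| destruct H as (_&_&_&_&_&_&_&_&_&_&_&Hp&_); auto]).
  destruct H as (Hh & HA & HB & _). unfold ac. subst A. field. split; lra.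
Qed.

Lemma cc_form h A B lam T eta beta K cm C0 phimin psi c0 f
  (H : SA h A B lam T eta beta K cm C0 phimin psi c0 f) k t :
  cc h A B lam T c0 f k t = (2 + B * ghat A B lam T c0 f k t + B * ghat A B lam T c0 f (pred k) t)
     / (2 * (A + B * ghat A B lam T c0 f k t) * h ^ 2).
Proof.
  pose proof (Apos _ _ _ _ _ _ _ _ _ _ _ _ _ _ H k t) as HP.
  assert (0 < Rmin 1 phimin) by (apply Rmin_pos; [lra| destruct H as (_&_&_&_&_&_&_&_&_&_&_&Hp&_); auto]).
  destruct H as (Hh & HA & HB & _). unfold cc. subst A. field. split; lra.
Qed.

Definition Mc h C0 phimin := (1 + C0) / (Rmin 1 phimin * h ^ 2).

Lemma frac_bd h A B lam T eta beta K cm C0 phimin psi c0 f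
  (H : SA h A B lam T eta beta K cm C0 phimin psi c0 f) k j t :
  0 <= (2 + B * ghat A B lam T c0 f k t + B * ghat A B lam T c0 f j t)
     / (2 * (A + B * ghat A B lam T c0 f k t) * h ^ 2) <= Mc h C0 phimin.
Proof.
  pose proof (Apos _ _ _ _ _ _ _ _ _ _ _ _ _ _ H k t) as HP.
  pose proof (ghat_bd _ _ _ _ _ _ _ _ _ _ _ _ _ _ H k t) as [G1 G2].
  pose proof (ghat_bd _ _ _ _ _ _ _ _ _ _ _ _ _ _ H j t) as [G3 G4].
  destruct H as (Hh & HA & HB & Hlam & HT & Heta & Hbeta & Hhol & Hpsi & Hcm & Hc0 & Hphim & Hphi & HB1 & HF).
  set (m := Rmin 1 phimin) in *.
  assert (Hm : 0 < m) by (apply Rmin_pos; lra).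
  set (g := ghat A B lam T c0 f k t) in *. set (g1 := ghat A B lam T c0 f j t) in *.
  set (N := 2 + B * g + B * g1).
  assert (HN : 0 <= N <= 2 + 2 * C0).
  { unfold N. destruct HB as [-> | ->]. specialize (G2 eq_refl). specialize (G4 eq_refl). nra. nra. }
  assert (Hh2 : 0 < h ^ 2) by (apply pow_lt; auto).
  assert (HD : 0 < 2 * (A + B * g) * h ^ 2) by (apply Rmult_lt_0_compat; lra).
  split. apply Rdiv_le_0_compat; lra.
  unfold Mc. fold m. apply (Rmult_le_reg_r (2 * (A + B * g) * h ^ 2)); auto.
  unfold Rdiv. rewrite Rmult_assoc, Rinv_l, Rmult_1_r by lra.
  replace ((1 + C0) * / (m * h ^ 2) * (2 * (A + B * g) * h ^ 2)) with
    ((2 + 2 * C0) * ((A + B * g) / m)) by (field; lra).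
  assert (1 <= (A + B * g) / m).
  { apply (Rmult_le_reg_r m); auto. unfold Rdiv. rewrite Rmult_assoc, Rinv_l, Rmult_1_r by lra. lra. }
  nra.
Qed.

Definition M0c h lam eta C0 phimin := 2 * Mc h C0 phimin + lam * C0 * (eta + 1) + 1.

Lemma coeff_ODEH h A B lam T eta beta K cm C0 phimin psi c0 f (s0 : nat -> R)
  (H : SA h A B lam T eta beta K cm C0 phimin psi c0 f) (Hs0 : forall k, 0 <= s0 k <= eta) :
  ODEH T eta (M0c h lam eta C0 phimin) (ac h A B lam T c0 f) (cc h A B lam T c0 f)
    (dc h A B lam T c0 f) (fun t => psi (cl T t)) s0.
Proof.
  assert (HMc : 0 <= Mc h C0 phimin).
  { pose proof (frac_bd _ _ _ _ _ _ _ _ _ _ _ _ _ _ H 0%nat 0%nat 0). lra. }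
  pose proof H as H'.
  destruct H' as (Hh & HA & HB & Hlam & HT & Heta & Hbeta & Hhol & Hpsi & Hcm & Hc0 & Hphim & Hphi & HB1 & HF).
  pose proof HF as HF'. destruct HF' as (HK & Hcl2 & _ & _ & _ & Hf0 & Hfpsi & Hfb).
  assert (HC0 : 0 < C0) by (pose proof (Hc0 0%nat); lra).
  unfold ODEH. split; [auto|split; [auto|split; [|split; [|split; [|split; [|split]]]]]].
  - unfold M0c. assert (0 <= lam * C0 * (eta + 1)) by (apply Rmult_le_pos; [apply Rmult_le_pos|]; lra). lra.
  - intros k t Hk.
    pose proof (frac_bd _ _ _ _ _ _ _ _ _ _ _ _ _ _ H k (S k) t) as F1.
    pose proof (frac_bd _ _ _ _ _ _ _ _ _ _ _ _ _ _ H k (pred k) t) as F2.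
    rewrite <- (ac_form _ _ _ _ _ _ _ _ _ _ _ _ _ _ H) in F1.
    rewrite <- (cc_form _ _ _ _ _ _ _ _ _ _ _ _ _ _ H) in F2.
    pose proof (ghat_bd _ _ _ _ _ _ _ _ _ _ _ _ _ _ H k t) as [G1 _].
    pose proof (Hfb (cl T t) k (cl_in T t ltac:(lra))) as Hf.
    set (g := ghat A B lam T c0 f k t) in *.
    set (fv := f (cl T t) k) in *.
    assert (Hlg : 0 <= lam * g <= lam * C0) by (split; nra).
    assert (Hbf : Rabs (B * fv - 1) <= eta + 1 /\ B * fv - 1 <= 0).
    { destruct HB as [-> | ->]. split. apply Rabs_le_between; lra. lra.
      specialize (HB1 eq_refl). split. apply Rabs_le_between; lra. lra. }
    assert (Hgam : Rabs (lam * g * (B * fv - 1)) <= lam * C0 * (eta + 1)).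
    { rewrite Rabs_mult. rewrite (Rabs_right (lam * g)) by lra. apply Rmult_le_compat; try lra.
      apply Rabs_pos. }
    unfold M0c. unfold dc. fold g fv.
    assert (0 <= lam * C0 * (eta + 1)) by (apply Rmult_le_pos; [apply Rmult_le_pos|]; lra).
    split; [lra|split; [lra|split]].
    + apply Rabs_le_between in Hgam. apply Rabs_le_between. lra.
    + assert (lam * g * (B * fv - 1) <= 0).
      { replace (lam * g * (B * fv - 1)) with (- ((lam * g) * (- (B * fv - 1)))) by ring.
        assert (0 <= (lam * g) * (- (B * fv - 1))) by (apply Rmult_le_pos; lra). lra. }
      lra.
  - intros k t Hk.
    assert (Hg : forall j, continuous (ghat A B lam T c0 f j) t)
      by (intros; apply (ghat_cont _ _ _ _ _ _ _ _ _ _ _ _ _ _ H)).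
    assert (Hnz : 2 * (A + B * ghat A B lam T c0 f k t) <> 0).
    { pose proof (Apos _ _ _ _ _ _ _ _ _ _ _ _ _ _ H k t). assert (0 < Rmin 1 phimin) by (apply Rmin_pos; lra). lra. }
    assert (Hden : continuous (fun y => 2 * (A + B * ghat A B lam T c0 f k y)) t).
    { apply cmult. apply cconst. apply cplus. apply cconst. apply cmult. apply cconst. apply Hg. }
    assert (Hcoef : continuous (fun y => B / (2 * (A + B * ghat A B lam T c0 f k y))) t).
    { apply cdiv. apply cconst. auto. auto. }
    split; [|split].
    + unfold ac. apply cplus. apply cconst. apply cdiv; [|apply cconst|lra].
      apply cmult; auto. apply cdiv; [|apply cconst|lra]. apply cminus; apply Hg.
    + unfold cc. apply cminus. apply cconst. apply cdiv; [|apply cconst|lra].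
      apply cmult; auto. apply cdiv; [|apply cconst|lra]. apply cminus; apply Hg.
    + unfold dc. apply cplus. apply cminus. apply (cext (fun y => - ac h A B lam T c0 f k y)).
      intros; reflexivity.
      apply (continuous_opp (ac h A B lam T c0 f k)).
      unfold ac. apply cplus. apply cconst. apply cdiv; [|apply cconst|lra].
      apply cmult; auto. apply cdiv; [|apply cconst|lra]. apply cminus; apply Hg.
      unfold cc. apply cminus. apply cconst. apply cdiv; [|apply cconst|lra].
      apply cmult; auto. apply cdiv; [|apply cconst|lra]. apply cminus; apply Hg.
      apply cmult. apply cmult. apply cconst. apply Hg.
      apply cminus; [|apply cconst]. apply cmult. apply cconst.
      apply (fk_cont _ _ _ _ _ _ _ _ _ _ _ _ _ _ H).
  - intros t. apply holder_cont with beta; auto; lra.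
  - intros t. apply Hpsi. apply cl_in; lra.
  - intros k _. auto.
Qed.

Lemma rhs_id h A B lam T eta beta K cm C0 phimin psi c0 f
  (H : SA h A B lam T eta beta K cm C0 phimin psi c0 f) (s : R -> nat -> R) k t :
  (1 <= k)%nat -> 0 <= t <= T ->
  rhs h A B lam c0 f s t k = ac h A B lam T c0 f k t * s t (S k) + cc h A B lam T c0 f k t * s t (pred k)
    + dc h A B lam T c0 f k t * s t k.
Proof.
  intros Hk Ht.
  assert (Hnz : A + B * ghat A B lam T c0 f k t <> 0).
  { pose proof (Apos _ _ _ _ _ _ _ _ _ _ _ _ _ _ H k t).
    assert (0 < Rmin 1 phimin) by (apply Rmin_pos; [lra| destruct H as (_&_&_&_&_&_&_&_&_&_&_&Hp&_); auto]). lra. }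
  destruct H as (Hh & _).
  unfold dc. unfold ac, cc. unfold ghat in *. rewrite !(cl_id T t) in * by auto.
  unfold rhs, Lap, Dp, Dm, bco, gammaco.
  field. split; lra.
Qed.


Theorem mainTheorem7
  (h A B lam T eta beta K cm C0 phimin phimax : R)
  (psi : R -> R) (s0 c0 : nat -> R) (f : R -> nat -> R)
  (hh : 0 < h) (hA : A = 1) (hB : B = -1 \/ B = 1)
  (hlam : 0 < lam) (hT : 0 < T) (heta : 0 < eta)
  (hbeta : 1/4 < beta < 1/2) (hpsi_hol : holder T beta psi)
  (hpsi_bd : forall t, 0 <= t <= T -> 0 <= psi t <= eta) (hpsi0 : psi 0 = 0)
  (hs0_bd : forall k, 0 <= s0 k <= eta) (hs00 : s0 0%nat = 0)
  (hs0_L2 : inL2 s0) (hDs0_L2 : inL2 (Dp h s0))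
  (hcm : 0 < cm) (hc0_bd : forall k, cm <= c0 k <= C0)
  (hc0_L2 : inL2 (fun k => C0 - c0 k)) (hDc0_L2 : inL2 (Dp h c0))
  (hphimin : 0 < phimin) (hphi_le : phimin <= phimax)
  (hphi : forall c, 0 <= c <= C0 -> phimin <= phi A B c <= phimax)
  (hB1 : B = 1 -> eta < 1)
  (hF : condF h T eta psi K f) :
  exists s : R -> nat -> R,
    is_solution h T A B lam psi s0 c0 f s /\ bounded_on T s /\
    (forall s' : R -> nat -> R,
       is_solution h T A B lam psi s0 c0 f s' -> bounded_on T s' ->
       forall t k, 0 <= t <= T -> s' t k = s t k) /\
    (forall t k, 0 <= t <= T -> (1 <= k)%nat -> 0 <= s t k <= eta).
Proof.
  assert (H : SA h A B lam T eta beta K cm C0 phimin psi c0 f).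
  { unfold SA.
    refine (conj hh (conj hA (conj hB (conj hlam (conj hT (conj heta (conj _ (conj hpsi_hol
      (conj hpsi_bd (conj hcm (conj hc0_bd (conj hphimin (conj _ (conj hB1 hF)))))))))))))).
    lra. intros c Hc; apply hphi; auto. }
  pose proof (coeff_ODEH _ _ _ _ _ _ _ _ _ _ _ _ _ _ s0 H hs0_bd) as HO.
  destruct (ode_exists _ _ _ _ _ _ _ _ HO) as [s (Hs0b & Hsi & Hsd & Hsc & Hsb)].
  assert (Hsol : is_solution h T A B lam psi s0 c0 f s).
  { split; [|split; [|split; [|split]]].
    - intros k Hk t0 Ht0 eps Heps.
      destruct (eps_of_cont _ t0 (Hsc k t0 Hk) eps Heps) as [del [Hdel Hy]].
      exists del. split. exact Hdel. intros t Ht Htt. apply Hy. exact Htt.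
    - intros k Hk t Ht. rewrite (rhs_id _ _ _ _ _ _ _ _ _ _ _ _ _ _ H) by (auto; lra).
      apply Hsd; auto; lra.
    - intros k Hk. apply left_of_derive.
      rewrite (rhs_id _ _ _ _ _ _ _ _ _ _ _ _ _ _ H) by (auto; lra).
      apply Hsd; auto; lra.
    - intros k Hk. apply Hsi; auto.
    - intros t Ht. rewrite Hs0b. rewrite cl_id; auto. }
  exists s. split; [auto|split; [|split]].
  - exists eta. intros t k Ht. pose proof (Hsb k t Ht). rewrite Rabs_right; lra.
  - intros s' Hsol' [M' HM'] t k Ht.
    destruct Hsol' as (Hc' & Hd' & _ & Hi' & Hb').
    set (w := fun t k => s' t k - s t k).
    assert (Hw := ode_unique _ _ _ _ _ _ _ _ HO w).
    cut (w t k = 0). { unfold w. lra. }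
    apply Hw; auto.
    + intros t1 Ht1. unfold w. rewrite Hb', Hs0b, cl_id by auto. ring.
    + intros k1 Hk1. unfold w. rewrite Hi', Hsi by auto. ring.
    + intros k1 t1 Hk1 Ht1. unfold w. eapply is_derive_eq.
      apply drv_minus. apply Hd'; auto. apply Hsd; auto; lra.
      rewrite (rhs_id _ _ _ _ _ _ _ _ _ _ _ _ _ _ H) by (auto; lra). ring.
    + intros k1 x Hk1. unfold w. apply cminus.
      * apply cont_of_eps. intros e He.
        destruct (Hc' k1 Hk1 (cl T x) (cl_in T x ltac:(lra)) e He) as [del [Hdel Hy]].
        exists del. split; auto. intros y Hyx. apply Hy. apply cl_in; lra.
        eapply Rle_lt_trans. apply cl_lip; lra. auto.
      * apply (ccl (fun t => s t k1)); [lra|]. intros; apply Hsc; auto.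
    + exists (M' + eta). intros t1 k1 Ht1. unfold w.
      pose proof (HM' t1 k1 Ht1). pose proof (Hsb k1 t1 Ht1).
      pose proof (Rabs_triang (s' t1 k1) (- s t1 k1)). rewrite Rabs_Ropp in H2.
      rewrite (Rabs_right (s t1 k1)) in H2 by lra. unfold Rminus. lra.
  - intros t k Ht Hk. apply Hsb; auto.
Qed.
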